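(* There exist positive constants $c_1,c_2,c_3$, independent of $n$ and $t$, such that for all sufficiently large $n$, \[ \frac{1}{y_1(t)}\le \begin{cases} c_1\,n^{1-\beta}, & 0\le t\le 1,\\[2pt] c_2+c_3\,n^{\min\{1-\beta,\alpha\}}e^{-\lambda_1 t}, & t>1. \end{cases} \]
   Context: Fix constants $r_0,d_0\ge 0$ with $\lambda_0:=r_0-d_0<0$, $d_1>0$, $k>1$, $\alpha\in(0,1)$, $\beta\in(0,1)$. Let $f:[0,\infty)^2\to[0,\infty)$ satisfy: (A1) $f$ is Lipschitz continuous; (A2) $f(x,y)=r_1$ when $x+y=0$ and $f(x,y)=d_1$ when $x+y=1$, where $r_1:=f(0,0)>d_1$; (A3) $f(x,y)=\Phi(x+y)$ for some non-increasing function $\Phi:[0,\infty)\to[0,\infty)$; (A4) $f(x,y)\to0$ as $x\to\infty$ and as $y\to\infty$; (A5) $f(x,y)\ge \lambda_1(1-(x+y))+d_1$ for all $x,y\ge0$, where $\lambda_1:=r_1-d_1>0$. Put $\phi(x,y):=f(x,y)-d_1$. For each integer $n\ge1$ let $K=K(n):=kn$ and let $(y_0,y_1,y_\beta)$ solve \[ \dot y_0=\lambda_0 y_0,\qquad \dot y_1=\phi(y_0,y_1)\,y_1+n^{-\alpha}y_0,\qquad \dot y_\beta=\phi(y_0,y_1)\,y_\beta, \] with $(y_0(0),y_1(0),y_\beta(0))=(n/K,\,n^\beta/K,\,n^\beta/K)$. *)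

(* Defs.v *)
From Stdlib Require Import Reals.
From Coquelicot Require Import Coquelicot.
Open Scope R_scope.

(* Standing assumptions (A1)-(A5) on f : [0,oo)^2 -> [0,oo),
   with r1 := f 0 0 and lambda1 := r1 - d1. *)
Definition f_assumptions (f : R -> R -> R) (d1 : R) : Prop :=
  (forall x y, 0 <= x -> 0 <= y -> 0 <= f x y) /\
  (exists L, 0 <= L /\ forall x y x' y', 0 <= x -> 0 <= y -> 0 <= x' -> 0 <= y' ->
     Rabs (f x y - f x' y') <= L * (Rabs (x - x') + Rabs (y - y'))) /\
  (forall x y, 0 <= x -> 0 <= y -> x + y = 0 -> f x y = f 0 0) /\
  (forall x y, 0 <= x -> 0 <= y -> x + y = 1 -> f x y = d1) /\
  f 0 0 > d1 /\
  (exists Phi : R -> R,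
     (forall s, 0 <= s -> 0 <= Phi s) /\
     (forall s s', 0 <= s -> s <= s' -> Phi s' <= Phi s) /\
     (forall x y, 0 <= x -> 0 <= y -> f x y = Phi (x + y))) /\
  (forall y, 0 <= y -> is_lim (fun x => f x y) p_infty 0) /\
  (forall x, 0 <= x -> is_lim (fun y => f x y) p_infty 0) /\
  (forall x y, 0 <= x -> 0 <= y -> f x y >= (f 0 0 - d1) * (1 - (x + y)) + d1).

Definition is_solution (f : R -> R -> R) (lam0 d1 k alpha beta : R) (n : nat)
    (y0 y1 yb : R -> R) : Prop :=
  let nR := INR n in
  let K := k * nR in
  let phi := fun x y => f x y - d1 in
  y0 0 = nR / K /\ y1 0 = Rpower nR beta / K /\ yb 0 = Rpower nR beta / K /\
  filterlim y0 (at_right 0) (locally (y0 0)) /\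
  filterlim y1 (at_right 0) (locally (y1 0)) /\
  filterlim yb (at_right 0) (locally (yb 0)) /\
  (forall t, 0 < t ->
     is_derive y0 t (lam0 * y0 t) /\
     is_derive y1 t (phi (y0 t) (y1 t) * y1 t + Rpower nR (- alpha) * y0 t) /\
     is_derive yb t (phi (y0 t) (y1 t) * yb t)).

(* Main.v *)
From Stdlib Require Import Reals Lra Classical.
From Coquelicot Require Import Coquelicot.
Open Scope R_scope.
Require Import Defs.

Lemma right_lim g a c : filterlim g (at_right a) (locally c) ->
  forall eps, 0 < eps -> exists d, 0 < d /\ forall s, a < s < a + d -> Rabs (g s - c) < eps.
Proof.
intros H eps He. rewrite filterlim_locally in H.
destruct (H (mkposreal eps He)) as [d Hd].
exists d. split. apply cond_pos. intros s Hs. apply (Hd s). change (Rabs (s - a) < d).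
rewrite Rabs_right; lra. lra.
Qed.

Lemma cont_der (g : R -> R) (dg m : R) : is_derive g m dg ->
  forall eps, 0 < eps -> exists d, 0 < d /\ forall s, Rabs (s - m) < d -> Rabs (g s - g m) < eps.
Proof.
intros H eps He.
assert (C : continuous g m) by (apply (@ex_derive_continuous R_AbsRing R_NormedModule); eexists; eauto).
unfold continuous in C. rewrite filterlim_locally in C.
destruct (C (mkposreal eps He)) as [d Hd].
exists d. split. apply cond_pos. intros s Hs. apply (Hd s). exact Hs.
Qed.

Lemma mono_der (g dg : R -> R) p q : (forall s, p <= s <= q -> is_derive g s (dg s)) ->
  (forall s, p <= s <= q -> 0 <= dg s) -> p <= q -> g p <= g q.
Proof.
intros Hd Hp Hpq.
destruct (MVT_gen g p q dg) as [xi [Hxi E]].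
- intros x Hx. apply Hd. rewrite Rmin_left in Hx by lra. rewrite Rmax_right in Hx by lra. lra.
- intros x Hx. rewrite Rmin_left in Hx by lra. rewrite Rmax_right in Hx by lra.
  apply continuity_pt_filterlim. apply (@ex_derive_continuous R_AbsRing R_NormedModule). eexists; apply Hd; lra.
- rewrite Rmin_left in Hxi by lra. rewrite Rmax_right in Hxi by lra.
  assert (0 <= dg xi * (q - p)) by (apply Rmult_le_pos; [apply Hp; lra | lra]). lra.
Qed.

Lemma barrier (a c0 : R) (g dg : R -> R) : 0 < c0 ->
  (forall s, a < s -> is_derive g s (dg s)) ->
  filterlim g (at_right a) (locally c0) ->
  (forall s, a < s -> 0 < g s -> 0 <= dg s) ->
  forall t, a < t -> c0 <= g t.
Proof.
intros Hc0 Hder Hlim Hpos.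
assert (SA : forall q, a < q -> (forall s, a < s <= q -> 0 < g s) -> c0 <= g q).
{ intros q Hq Hg. apply Rnot_lt_le. intro Hlt.
  destruct (right_lim g a c0 Hlim (c0 - g q)) as [d [Hd Hs]]; [lra|].
  set (s := a + Rmin d (q - a) / 2).
  assert (Hm1 : Rmin d (q - a) <= d) by apply Rmin_l.
  assert (Hm2 : Rmin d (q - a) <= q - a) by apply Rmin_r.
  assert (Hm3 : 0 < Rmin d (q - a)) by (apply Rmin_glb_lt; lra).
  assert (H1 := Hs s ltac:(unfold s; lra)).
  assert (H2 : g s <= g q).
  { apply (mono_der g dg). intros; apply Hder; unfold s in *; lra.
    intros; apply Hpos; [unfold s in *; lra| apply Hg; unfold s in *; lra]. unfold s; lra. }
  apply Rabs_def2 in H1. lra. }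
intros t Ht.
destruct (right_lim g a c0 Hlim (c0/2)) as [d [Hd Hs]]; [lra|].
set (E := fun s => a < s <= t /\ forall u, a < u <= s -> c0/2 < g u).
assert (Hm3 : 0 < Rmin d (t - a)) by (apply Rmin_glb_lt; lra).
assert (Hm1 : Rmin d (t - a) <= d) by apply Rmin_l.
assert (Hm2 : Rmin d (t - a) <= t - a) by apply Rmin_r.
assert (E0 : E (a + Rmin d (t - a) / 2)).
{ split. lra. intros u Hu. assert (H1 := Hs u ltac:(lra)). apply Rabs_def2 in H1. lra. }
destruct (completeness E) as [m [Hub Hlub]].
{ exists t. intros x Hx. apply Hx. }
{ eexists; exact E0. }
assert (Hma : a + Rmin d (t - a) / 2 <= m) by (apply Hub; exact E0).
assert (Hmt : m <= t) by (apply Hlub; intros x Hx; apply Hx).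
assert (Hin : forall u, a < u < m -> c0/2 < g u).
{ intros u Hu. destruct (classic (exists s, E s /\ u < s)) as [[s [Es Hus]]|Hn].
  - apply Es. lra.
  - assert (m <= u). { apply Hlub. intros x Hx. apply Rnot_lt_le. intro. apply Hn. exists x; auto. }
    lra. }
assert (Hge : forall u, a < u < m -> c0 <= g u).
{ intros u Hu. apply SA. lra. intros s Hs0. assert (c0/2 < g s) by (apply Hin; lra). lra. }
assert (Hgm : c0 <= g m).
{ apply Rnot_lt_le. intro Hlt.
  destruct (cont_der g (dg m) m (Hder m ltac:(lra)) (c0 - g m)) as [d2 [Hd2 Hc]]; [lra|].
  assert (0 < Rmin d2 (m - a)) by (apply Rmin_glb_lt; lra).
  assert (Rmin d2 (m - a) <= d2) by apply Rmin_l.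
  assert (Rmin d2 (m - a) <= m - a) by apply Rmin_r.
  set (s := m - Rmin d2 (m - a) / 2).
  assert (H1c := Hc s ltac:(unfold s; rewrite Rabs_left; lra)).
  assert (H2 := Hge s ltac:(unfold s; lra)). apply Rabs_def2 in H1c. lra. }
destruct (Req_dec m t) as [->|Hne]; [exact Hgm|].
exfalso.
destruct (cont_der g (dg m) m (Hder m ltac:(lra)) (c0/2)) as [d3 [Hd3 Hc]]; [lra|].
assert (0 < Rmin d3 (t - m)) by (apply Rmin_glb_lt; lra).
assert (Rmin d3 (t - m) <= d3) by apply Rmin_l.
assert (Rmin d3 (t - m) <= t - m) by apply Rmin_r.
assert (Es : E (m + Rmin d3 (t - m) / 2)).
{ split. lra. intros u Hu. destruct (Rlt_le_dec u m).
  - assert (c0 <= g u) by (apply Hge; lra). lra.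
  - assert (H1d := Hc u ltac:(rewrite Rabs_right; lra)). apply Rabs_def2 in H1d. lra. }
assert (Hz := Hub _ Es). lra.
Qed.

Lemma lim_affine (y e1 e2 : R -> R) a L L' :
  filterlim y (at_right a) (locally L) -> continuous e1 a -> continuous e2 a ->
  L' = e1 a * L + e2 a ->
  filterlim (fun t => e1 t * y t + e2 t) (at_right a) (locally L').
Proof.
intros Hy H1 H2 ->.
assert (H1' : filterlim e1 (at_right a) (locally (e1 a))).
{ eapply filterlim_filter_le_1. apply filter_le_within. exact H1. }
assert (H2' : filterlim e2 (at_right a) (locally (e2 a))).
{ eapply filterlim_filter_le_1. apply filter_le_within. exact H2. }
apply (filterlim_comp_2 (F:=at_right a) (G:=locally (e1 a * L)) (H:=locally (e2 a)) (fun t => e1 t * y t) e2 Rplus).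
- apply (filterlim_comp_2 (F:=at_right a) (G:=locally (e1 a)) (H:=locally L) e1 y Rmult). exact H1'. exact Hy. apply (@filterlim_mult R_AbsRing).
- exact H2'.
- apply (@filterlim_plus R_AbsRing R_NormedModule).
Qed.

Lemma der_prod (e y : R -> R) de dy x : is_derive e x de -> is_derive y x dy ->
  is_derive (fun t => e t * y t) x (de * y x + e x * dy).
Proof. intros A B. apply (@is_derive_mult R_AbsRing); auto. intros; apply Rmult_comm. Qed.

Lemma der_plus (e y : R -> R) de dy x : is_derive e x de -> is_derive y x dy ->
  is_derive (fun t => e t + y t) x (de + dy).
Proof. intros A B. apply (@is_derive_plus R_AbsRing R_NormedModule); auto. Qed.

Lemma cont_expl (e : R -> R) x d : is_derive e x d -> continuous e x.
Proof. intros A. apply (@ex_derive_continuous R_AbsRing R_NormedModule). eexists; eauto. Qed.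


Lemma der_eq (g : R -> R) x l l' : is_derive g x l -> l = l' -> is_derive g x l'.
Proof. intros A ->; exact A. Qed.

Lemma der_const (c x : R) : is_derive (fun _ => c) x 0.
Proof. apply (@is_derive_const R_AbsRing R_NormedModule). Qed.

Lemma exp_le a b : a <= b -> exp a <= exp b.
Proof. intros H. destruct (Rle_lt_or_eq_dec a b H) as [h|h]. left; apply exp_increasing; auto. subst; lra. Qed.

Lemma Rpower_pos' x y : 0 < Rpower x y.
Proof. unfold Rpower. apply exp_pos. Qed.

Theorem mainTheorem4 (r0 d0 d1 k alpha beta : R) (f : R -> R -> R) :
  0 <= r0 -> 0 <= d0 -> r0 - d0 < 0 -> 0 < d1 -> 1 < k ->
  0 < alpha < 1 -> 0 < beta < 1 ->
  f_assumptions f d1 ->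
  exists c1 c2 c3 : R, 0 < c1 /\ 0 < c2 /\ 0 < c3 /\
  exists N : nat, forall n : nat, (N <= n)%nat ->
  forall y0 y1 yb : R -> R,
    is_solution f (r0 - d0) d1 k alpha beta n y0 y1 yb ->
    forall t : R,
      (0 <= t <= 1 -> / y1 t <= c1 * Rpower (INR n) (1 - beta)) /\
      (1 < t -> / y1 t <= c2 + c3 * Rpower (INR n) (Rmin (1 - beta) alpha)
                                * exp (- (f 0 0 - d1) * t)).
Proof.
intros Hr0 Hd0 Hl0 Hd1 Hk Ha Hb Hf.
destruct Hf as [Hf0 [_ [_ [_ [Hr1 [_ [_ [_ HA5]]]]]]]].
set (l0 := r0 - d0) in *.
set (l1 := f 0 0 - d1) in *.
assert (Hl1 : 0 < l1) by (unfold l1; lra).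
set (mu := d1 - l0).
assert (Hmu : 0 < mu) by (unfold mu; lra).
set (D := exp (l1 / (k * - l0))).
assert (HD : 1 <= D).
{ unfold D. rewrite <- exp_0. apply exp_le. unfold Rdiv. apply Rmult_le_pos. lra.
  left; apply Rinv_0_lt_compat. nra. }
assert (Hemu : 1 <= exp mu) by (rewrite <- exp_0; apply exp_le; lra).
exists (k * exp mu), D, (D * exp l1 * k * exp mu).
split. nra. split. lra. split.
{ assert (0 < exp l1) by apply exp_pos. repeat apply Rmult_lt_0_compat; lra. }
exists 1%nat. intros n Hn y0 y1 yb Hsol.
destruct Hsol as [H0 [H1 [_ [L0 [L1 [_ Hd]]]]]].
set (nR := INR n) in *.
assert (HnR : 1 <= nR) by (unfold nR; change 1 with (INR 1); apply le_INR; exact Hn).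
set (a := Rpower nR (- alpha)) in *.
set (b := Rpower nR beta) in *.
set (P := Rpower nR (1 - beta)).
set (Q := Rpower nR alpha).
assert (HP : 0 < P) by apply Rpower_pos'.
assert (HQ : 0 < Q) by apply Rpower_pos'.
assert (Ha' : a = / Q) by (unfold a, Q; apply Rpower_Ropp).
assert (Hy10 : y1 0 = / (k * P)).
{ rewrite H1. unfold b, P. unfold Rminus. rewrite Rpower_plus, Rpower_1 by lra.
  rewrite Rpower_Ropp. field. split. apply Rgt_not_eq, Rpower_pos'. lra. }
assert (Hy00 : y0 0 = / k) by (rewrite H0; field; lra).
clear H0 H1.
rewrite Hy00 in L0.
assert (D0 : forall s, 0 < s -> is_derive y0 s (l0 * y0 s)) by (intros s Hs; apply (Hd s Hs)).
assert (Y0 : forall s, 0 < s -> y0 s = exp (l0 * s) / k).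
{ intros s Hs.
  assert (A1 : / k <= exp (- l0 * s) * y0 s + 0).
  { apply (barrier 0 (/k) (fun t => exp (- l0 * t) * y0 t + 0) (fun _ => 0)).
    - apply Rinv_0_lt_compat; lra.
    - intros x Hx. eapply der_eq. apply der_plus. apply der_prod.
      2: apply D0; auto. auto_derive; auto. apply der_const.
      simpl; ring.
    - apply lim_affine with (L := /k). exact L0.
      eapply cont_expl. auto_derive. auto. reflexivity. eapply cont_expl. apply der_const.
      rewrite Rmult_0_r, exp_0. ring.
    - intros; lra.
    - exact Hs. }
  assert (A2 : / k <= - exp (- l0 * s) * y0 s + 2 / k).
  { apply (barrier 0 (/k) (fun t => - exp (- l0 * t) * y0 t + 2 / k) (fun _ => 0)).
    - apply Rinv_0_lt_compat; lra.
    - intros x Hx. eapply der_eq. apply der_plus. apply der_prod.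
      2: apply D0; auto. auto_derive; auto. apply der_const.
      simpl; ring.
    - apply lim_affine with (L := /k). exact L0.
      eapply cont_expl. auto_derive. auto. reflexivity. eapply cont_expl. apply der_const.
      rewrite Rmult_0_r, exp_0. field. lra.
    - intros; lra.
    - exact Hs. }
  assert (E : exp (- l0 * s) * y0 s = / k) by lra.
  assert (Ee : exp (- l0 * s) * exp (l0 * s) = 1).
  { rewrite <- exp_plus. replace (- l0 * s + l0 * s) with 0 by ring. apply exp_0. }
  apply (Rmult_eq_reg_l (exp (- l0 * s))). rewrite E. unfold Rdiv.
  rewrite <- Rmult_assoc, Ee. ring. apply Rgt_not_eq, exp_pos. }
assert (D1 : forall s, 0 < s -> is_derive y1 s ((f (y0 s) (y1 s) - d1) * y1 s + a * y0 s))
  by (intros s Hs; apply (Hd s Hs)).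
assert (Hy10p : 0 < y1 0) by (rewrite Hy10; apply Rinv_0_lt_compat; nra).
assert (Hap : 0 < a) by (rewrite Ha'; apply Rinv_0_lt_compat; lra).
assert (FA : forall s, 0 < s -> y1 0 <= exp (mu * s) * y1 s + (- (a / k) * s)).
{ intros s Hs.
  apply (barrier 0 (y1 0) (fun t => exp (mu * t) * y1 t + (- (a / k) * t))
     (fun t => mu * exp (mu * t) * y1 t + exp (mu * t) * ((f (y0 t) (y1 t) - d1) * y1 t + a * y0 t) - a / k)).
  - exact Hy10p.
  - intros x Hx. eapply der_eq. apply der_plus. apply der_prod.
    2: apply D1; auto. auto_derive; auto; try reflexivity. auto_derive; auto; try reflexivity.
    simpl; ring.
  - apply lim_affine with (L := y1 0). exact L1.
    eapply cont_expl. auto_derive. auto. reflexivity. eapply cont_expl. auto_derive; auto; try reflexivity.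
    rewrite Rmult_0_r, exp_0. ring.
  - intros x Hx Hg.
    assert (Hy1x : 0 < y1 x).
    { assert (0 < exp (mu * x)) by apply exp_pos.
      assert (0 <= a / k * x) by (apply Rmult_le_pos; [unfold Rdiv; apply Rmult_le_pos; [lra| left; apply Rinv_0_lt_compat; lra] | lra]).
      destruct (Rle_lt_dec (y1 x) 0); [|auto]. nra. }
    rewrite (Y0 x Hx).
    assert (Hy0x : 0 <= exp (l0 * x) / k).
    { unfold Rdiv; apply Rmult_le_pos; [left; apply exp_pos| left; apply Rinv_0_lt_compat; lra]. }
    assert (Hfx := Hf0 _ _ Hy0x (Rlt_le _ _ Hy1x)).
    assert (Ee : exp (mu * x) * exp (l0 * x) = exp (d1 * x)).
    { rewrite <- exp_plus. f_equal. unfold mu; ring. }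
    assert (Ed : 1 <= exp (d1 * x)) by (rewrite <- exp_0; apply exp_le; nra).
    assert (0 < exp (mu * x)) by apply exp_pos.
    assert (T1 : 0 <= exp (mu * x) * ((f (exp (l0 * x) / k) (y1 x) - l0) * y1 x)).
    { apply Rmult_le_pos. lra. apply Rmult_le_pos; lra. }
    assert (T2 : a / k <= a * exp (d1 * x) / k).
    { unfold Rdiv. apply Rmult_le_compat_r. left; apply Rinv_0_lt_compat; lra. nra. }
    replace (mu * exp (mu * x) * y1 x + exp (mu * x) * ((f (exp (l0 * x) / k) (y1 x) - d1) * y1 x + a * (exp (l0 * x) / k)) - a / k)
      with (exp (mu * x) * ((f (exp (l0 * x) / k) (y1 x) - l0) * y1 x) + (a * (exp (mu * x) * exp (l0 * x)) / k - a / k)).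
    rewrite Ee. lra. unfold mu. field. lra.
  - exact Hs. }
assert (Hak : 0 <= a / k) by (unfold Rdiv; apply Rmult_le_pos; [lra| left; apply Rinv_0_lt_compat; lra]).
assert (FA' : forall s, 0 < s -> y1 0 + a / k * s <= exp (mu * s) * y1 s).
{ intros s Hs. assert (H := FA s Hs). lra. }
assert (Y1p : forall s, 0 < s -> 0 < y1 s).
{ intros s Hs. assert (H := FA' s Hs). assert (0 <= a / k * s) by (apply Rmult_le_pos; lra).
  assert (0 < exp (mu * s)) by apply exp_pos.
  destruct (Rle_lt_dec (y1 s) 0); [|auto]. nra. }
intros t. split.
- intros [Ht0 Ht1]. destruct (Req_dec t 0) as [->|Htn].
  + rewrite Hy10, Rinv_inv. assert (0 < k * P) by nra. nra.
  + assert (Htp : 0 < t) by lra.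
    assert (H := FA' t Htp). assert (0 <= a / k * t) by (apply Rmult_le_pos; lra).
    assert (Hy := Y1p t Htp).
    assert (exp (mu * t) <= exp mu) by (apply exp_le; nra).
    assert (Hc : y1 0 <= exp mu * y1 t) by nra.
    assert (Hi := Rinv_le_contravar _ _ Hy10p Hc).
    rewrite Rinv_mult in Hi. rewrite Hy10, Rinv_inv in Hi.
    assert (0 < exp mu) by apply exp_pos.
    assert (/ y1 t = exp mu * (/ exp mu * / y1 t)) by (field; lra).
    nra.
- intros Ht.
  set (M := Rpower nR (Rmin (1 - beta) alpha)).
  set (u1 := / y1 1).
  assert (Hy11 := Y1p 1 ltac:(lra)).
  assert (Hu1 : u1 <= k * exp mu * M).
  { assert (H := FA' 1 ltac:(lra)). rewrite !Rmult_1_r in H.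
    assert (HM : 0 < M) by apply Rpower_pos'.
    assert (HkM : / (k * M) <= exp mu * y1 1).
    { unfold M, Rmin. destruct (Rle_dec (1 - beta) alpha).
      - fold P. rewrite <- Hy10. assert (0 <= a / k) by auto. lra.
      - fold Q. assert (a / k = / (k * Q)) by (rewrite Ha'; field; lra). assert (0 <= y1 0) by lra. lra. }
    assert (HkM0 : 0 < / (k * M)) by (apply Rinv_0_lt_compat; nra).
    assert (Hi := Rinv_le_contravar _ _ HkM0 HkM).
    rewrite Rinv_inv, Rinv_mult in Hi.
    assert (0 < exp mu) by apply exp_pos.
    unfold u1. assert (/ y1 1 = exp mu * (/ exp mu * / y1 1)) by (field; lra).
    nra. }
  set (Z := fun s => (exp (l0 * s) - exp l0) / (k * l0)).
  set (Ef := fun s => exp (l1 * (s - 1) - l1 * Z s)).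
  set (dEf := fun s => Ef s * (l1 - l1 * exp (l0 * s) / k)).
  assert (DEf : forall s, is_derive Ef s (dEf s)).
  { intros s. unfold dEf, Ef, Z. auto_derive. exact I. simpl. rewrite Rmult_comm. unfold Rminus, Rdiv. f_equal. field. lra. }
  set (g3 := fun s => (- Ef s) * (/ y1 s) + (u1 + exp (l1 * (s - 1)))).
  set (dg3 := fun s => (- dEf s) * / y1 s + (- Ef s) * (- ((f (y0 s) (y1 s) - d1) * y1 s + a * y0 s) / y1 s ^ 2)
                        + l1 * exp (l1 * (s - 1))).
  assert (DG : forall s, 0 < s -> is_derive g3 s (dg3 s)).
  { intros s Hs. unfold g3, dg3. apply der_plus. apply (der_prod (fun s => - Ef s) (fun s => / y1 s)).
    - eapply der_eq. apply (@is_derive_opp R_AbsRing R_NormedModule). apply DEf. reflexivity.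
    - apply is_derive_inv. apply D1; auto. apply Rgt_not_eq, Y1p; auto.
    - eapply der_eq. auto_derive; auto. simpl; unfold Rminus; ring. }
  assert (Z1 : Z 1 = 0) by (unfold Z; rewrite Rmult_1_r; unfold Rdiv; ring).
  assert (E1 : Ef 1 = 1) by (unfold Ef; rewrite Z1; replace (l1 * (1 - 1) - l1 * 0) with 0 by ring; apply exp_0).
  assert (G1 : g3 1 = 1).
  { unfold g3. rewrite E1. replace (l1 * (1 - 1)) with 0 by ring. rewrite exp_0. unfold u1. ring. }
  assert (Zb : forall s, 1 <= s -> 0 <= Z s /\ Z s <= 1 / (k * - l0)).
  { intros s Hs. assert (exp (l0 * s) <= exp l0) by (apply exp_le; nra).
    assert (0 < exp (l0 * s)) by apply exp_pos.
    assert (exp l0 < 1) by (rewrite <- exp_0; apply exp_increasing; lra).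
    assert (Zs : Z s = (exp l0 - exp (l0 * s)) * / (k * - l0)) by (unfold Z; field; lra).
    assert (0 < / (k * - l0)) by (apply Rinv_0_lt_compat; nra).
    rewrite Zs. split. apply Rmult_le_pos; lra. unfold Rdiv. apply Rmult_le_compat_r; lra. }
  assert (Bar : 1 <= g3 t).
  { rewrite <- G1. apply (barrier 1 (g3 1) g3 dg3).
    - lra.
    - intros; apply DG; lra.
    - eapply filterlim_filter_le_1. apply filter_le_within. eapply cont_expl. apply DG. lra.
    - intros s Hs _.
      assert (Hys := Y1p s ltac:(lra)). assert (Hy0s := Y0 s ltac:(lra)).
      assert (He : 0 < exp (l0 * s)) by apply exp_pos.
      assert (Hy0 : 0 <= y0 s).
      { rewrite Hy0s. unfold Rdiv; apply Rmult_le_pos; [lra| left; apply Rinv_0_lt_compat; lra]. }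
      assert (HF := HA5 _ _ Hy0 (Rlt_le _ _ Hys)).
      assert (HE : 0 < Ef s) by (unfold Ef; apply exp_pos).
      assert (HEle : Ef s <= exp (l1 * (s - 1))).
      { unfold Ef. apply exp_le. destruct (Zb s ltac:(lra)). nra. }
      assert (HB : 0 <= (f (y0 s) (y1 s) - d1) * y1 s + a * y0 s - (l1 - l1 * y0 s) * y1 s + l1 * y1 s ^ 2).
      { assert (0 <= a * y0 s) by (apply Rmult_le_pos; lra).
        assert (0 <= y1 s * ((f (y0 s) (y1 s) - d1) - l1 * (1 - (y0 s + y1 s)))) by (apply Rmult_le_pos; lra).
        nra. }
      assert (Hdg : dg3 s = l1 * (exp (l1 * (s - 1)) - Ef s) + Ef s / y1 s ^ 2 *
          ((f (y0 s) (y1 s) - d1) * y1 s + a * y0 s - (l1 - l1 * y0 s) * y1 s + l1 * y1 s ^ 2)).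
      { unfold dg3, dEf. rewrite Hy0s. field. split; lra. }
      rewrite Hdg. assert (0 <= Ef s / y1 s ^ 2) by (unfold Rdiv; apply Rmult_le_pos; [lra| left; apply Rinv_0_lt_compat; nra]).
      assert (0 <= Ef s / y1 s ^ 2 * ((f (y0 s) (y1 s) - d1) * y1 s + a * y0 s - (l1 - l1 * y0 s) * y1 s + l1 * y1 s ^ 2)) by (apply Rmult_le_pos; lra).
      assert (0 <= l1 * (exp (l1 * (s - 1)) - Ef s)) by (apply Rmult_le_pos; lra).
      lra.
    - lra. }
  unfold g3 in Bar.
  assert (Hyt := Y1p t ltac:(lra)).
  assert (HEt : 0 < Ef t) by (unfold Ef; apply exp_pos).
  assert (Hq : Ef t * / y1 t <= u1 + exp (l1 * (t - 1))) by lra.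
  assert (HinvE : / Ef t <= exp (- (l1 * (t - 1))) * D).
  { unfold Ef. rewrite <- exp_Ropp. unfold D. rewrite <- exp_plus. apply exp_le.
    destruct (Zb t ltac:(lra)) as [_ Zt]. unfold Rdiv in Zt. rewrite Rmult_1_l in Zt.
    unfold Rdiv. nra. }
  assert (Hx : / y1 t = (Ef t * / y1 t) * / Ef t) by (field; lra).
  assert (Hexp1 : exp (l1 * (t - 1)) * exp (- (l1 * (t - 1))) = 1)
    by (rewrite <- exp_plus; replace (l1 * (t - 1) + - (l1 * (t - 1))) with 0 by ring; apply exp_0).
  assert (Hexp2 : exp (- (l1 * (t - 1))) = exp l1 * exp (- l1 * t))
    by (rewrite <- exp_plus; f_equal; ring).
  assert (0 < exp (- (l1 * (t - 1)))) by apply exp_pos.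
  assert (0 < D) by lra.
  assert (0 <= Ef t * / y1 t) by (apply Rmult_le_pos; [lra| left; apply Rinv_0_lt_compat; lra]).
  assert (0 < / Ef t) by (apply Rinv_0_lt_compat; lra).
  assert (S1 : / y1 t <= (u1 + exp (l1 * (t - 1))) * (exp (- (l1 * (t - 1))) * D)).
  { rewrite Hx. apply Rmult_le_compat; lra. }
  assert (S2 : (u1 + exp (l1 * (t - 1))) * (exp (- (l1 * (t - 1))) * D)
               = D + D * exp l1 * u1 * exp (- l1 * t)).
  { replace ((u1 + exp (l1 * (t - 1))) * (exp (- (l1 * (t - 1))) * D))
      with (u1 * exp (- (l1 * (t - 1))) * D + (exp (l1 * (t - 1)) * exp (- (l1 * (t - 1)))) * D) by ring.
    rewrite Hexp1, Hexp2. ring. }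
  assert (0 < exp (- l1 * t)) by apply exp_pos.
  assert (0 < D * exp l1) by (apply Rmult_lt_0_compat; [lra| apply exp_pos]).
  assert (S3 : D * exp l1 * u1 * exp (- l1 * t) <= D * exp l1 * (k * exp mu * M) * exp (- l1 * t)).
  { apply Rmult_le_compat_r. lra. apply Rmult_le_compat_l; lra. }
  replace (D * exp l1 * k * exp mu * M * exp (- l1 * t)) with (D * exp l1 * (k * exp mu * M) * exp (- l1 * t)) by ring.
  lra.
Qed.
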